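(* There is an absolute constant $C$ such that for all positive integers $n$ and every height profile $(m,M)$ (of some sum-free subset of $\Lambda(R\cup L)$ meeting every fiber) with discrepancy $D$, $$\sum_{i=-2w}^{2w-2}|\Delta^2 m(i)|\le C(D+n),$$ where $(\Delta f)(i)=f(i+1)-f(i)$.
   Context: Sum-free: no $a,b,c$ (not necessarily distinct) with $a+b=c$, coordinatewise addition in $\mathbb{Z}^2$. $\Lambda(X)=\mathbb{Z}^2\cap X$. $R=\{(x,y):0.7n\le x+y\le n,\ |x-y|\le0.8n\}$, $L=\{(x,y):2\lceil0.7n\rceil\le x+y\le1.7n,\ |x-y|\le0.4n\}$, $w=\lfloor0.4n\rfloor$. Fibers $R_i=\{(x,y)\in\Lambda(R):x-y=i\}$ ($|i|\le2w$), $L_k=\{(x,y)\in\Lambda(L):x-y=k\}$ ($|k|\le w$). Height $h(x,y)=\lfloor(x+y-\lceil0.7n\rceil)/2\rfloor$ on $R$ and $\lfloor(x+y-2\lceil0.7n\rceil)/2\rfloor$ on $L$. For sum-free $S\subseteq\Lambda(R\cup L)$ meeting every fiber, its height profile is $(m,M)$ with $m(i)=\min h(S\cap R_i)$, $M(k)=\max h(S\cap L_k)$. Let $\mathcal{T}=\{(-t,2t,t):t\in[w]\}\cup\{(-w-t,2t-1,-w-1+t):t\in[w]\}$. For $s\in\{-1,0,1\}$ and $(i,j,k)\in\mathcal{T}$ set $d_s(i)=M(k+s)-m(j+s)-m(i)$ (taken to be $0$ when some index is outside the domain of $m$ or $M$), $D_s=\sum_{(i,j,k)\in\mathcal{T}}|d_s(i)|$,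 and the discrepancy is $D=\max\{D_{-1},D_0,D_1\}$. *)

(* Defs.v *)
From Stdlib Require Import ZArith Reals Bool.
Open Scope Z_scope.
Local Open Scope bool_scope.

(* ceil(0.7 n) for n >= 0 *)
Definition c07 (n : Z) : Z := (7 * n + 9) / 10.
Definition wd (n : Z) : Z := (4 * n) / 10.

Definition inR (n : Z) (p : Z * Z) : Prop :=
  let (x, y) := p in
  7 * n <= 10 * (x + y) /\ x + y <= n /\ 10 * Z.abs (x - y) <= 8 * n.

Definition inL (n : Z) (p : Z * Z) : Prop :=
  let (x, y) := p in
  2 * c07 n <= x + y /\ 10 * (x + y) <= 17 * n /\ 10 * Z.abs (x - y) <= 4 * n.

Definition hR (n : Z) (p : Z * Z) : Z := (fst p + snd p - c07 n) / 2.
Definition hL (n : Z) (p : Z * Z) : Z := (fst p + snd p - 2 * c07 n) / 2.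

Definition Rfib (n i : Z) (p : Z * Z) : Prop := inR n p /\ fst p - snd p = i.
Definition Lfib (n k : Z) (p : Z * Z) : Prop := inL n p /\ fst p - snd p = k.

Definition domm (n i : Z) : bool := (- 2 * wd n <=? i) && (i <=? 2 * wd n).
Definition domM (n k : Z) : bool := (- wd n <=? k) && (k <=? wd n).

Definition sum_free (A : Z * Z -> Prop) : Prop :=
  forall a b c, A a -> A b -> A c -> (fst a + fst b, snd a + snd b) <> c.

Definition is_height_profile (n : Z) (A : Z * Z -> Prop) (m M : Z -> Z) : Prop :=
  sum_free A /\
  (forall p, A p -> inR n p \/ inL n p) /\
  (forall i, domm n i = true -> exists p, A p /\ Rfib n i p) /\
  (forall k, domM n k = true -> exists p, A p /\ Lfib n k p) /\
  (forall i, domm n i = true ->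
     (exists p, A p /\ Rfib n i p /\ hR n p = m i) /\
     (forall p, A p -> Rfib n i p -> m i <= hR n p)) /\
  (forall k, domM n k = true ->
     (exists p, A p /\ Lfib n k p /\ hL n p = M k) /\
     (forall p, A p -> Lfib n k p -> hL n p <= M k)).

Fixpoint zsum_n (a : Z) (c : nat) (f : Z -> Z) : Z :=
  match c with
  | O => 0
  | Datatypes.S c' => f a + zsum_n (a + 1) c' f
  end.
Definition zsum (a b : Z) (f : Z -> Z) : Z := zsum_n a (Z.to_nat (b - a + 1)) f.

(* d_s(i) for the triple (i, j, k); 0 if some index is outside the domain *)
Definition dval (n : Z) (m M : Z -> Z) (s i j k : Z) : Z :=
  if domm n i && domm n (j + s) && domM n (k + s)
  then M (k + s) - m (j + s) - m i else 0.

(* D_s = sum over T = {(-t,2t,t)} u {(-w-t, 2t-1, -w-1+t)}, t in [w] *)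
Definition Ds (n : Z) (m M : Z -> Z) (s : Z) : Z :=
  zsum 1 (wd n) (fun t =>
    Z.abs (dval n m M s (- t) (2 * t) t) +
    Z.abs (dval n m M s (- wd n - t) (2 * t - 1) (- wd n - 1 + t))).

Definition discrepancy (n : Z) (m M : Z -> Z) : Z :=
  Z.max (Ds n m M (-1)) (Z.max (Ds n m M 0) (Ds n m M 1)).

Definition D2 (f : Z -> Z) (i : Z) : Z := f (i + 2) - 2 * f (i + 1) + f i.

(* Main.v *)
Require Import Defs.
From Stdlib Require Import ZArith Reals Lia Bool.
Open Scope Z_scope.

Lemma zn_S a c f : zsum_n a (S c) f = f a + zsum_n (a+1) c f.
Proof. reflexivity. Qed.

Lemma zn_add a c1 c2 f :
  zsum_n a (c1 + c2) f = zsum_n a c1 f + zsum_n (a + Z.of_nat c1) c2 f.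
Proof.
  revert a; induction c1 as [|c1 IH]; intro a; simpl.
  - rewrite Z.add_0_r; ring.
  - rewrite IH. replace (a + 1 + Z.of_nat c1) with (a + Z.pos (Pos.of_succ_nat c1)) by lia. ring.
Qed.

Lemma zn_le a c f g : (forall i, a <= i < a + Z.of_nat c -> f i <= g i) ->
  zsum_n a c f <= zsum_n a c g.
Proof.
  revert a; induction c as [|c IH]; intros a H; simpl. lia.
  assert (f a <= g a) by (apply H; lia).
  assert (zsum_n (a+1) c f <= zsum_n (a+1) c g) by (apply IH; intros; apply H; lia).
  lia.
Qed.

Lemma zn_nonneg a c f : (forall i, 0 <= f i) -> 0 <= zsum_n a c f.
Proof.
  revert a; induction c as [|c IH]; intros a H; simpl. lia.
  specialize (IH (a+1) H). specialize (H a). lia.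
Qed.

Lemma zn_plus a c f g :
  zsum_n a c (fun i => f i + g i) = zsum_n a c f + zsum_n a c g.
Proof. revert a; induction c as [|c IH]; intro a; simpl; [lia| rewrite IH; ring]. Qed.

Lemma zn_scale a c k f : zsum_n a c (fun i => k * f i) = k * zsum_n a c f.
Proof. revert a; induction c as [|c IH]; intro a; simpl; [lia| rewrite IH; ring]. Qed.

Lemma zn_shift a c k f : zsum_n a c (fun i => f (i + k)) = zsum_n (a + k) c f.
Proof.
  revert a; induction c as [|c IH]; intro a; simpl; [lia|].
  rewrite IH. replace (a + 1 + k) with (a + k + 1) by lia. reflexivity.
Qed.

Lemma zn_refl a c f :
  zsum_n a c (fun i => f (- i)) = zsum_n (- (a + Z.of_nat c) + 1) c f.
Proof.
  revert a; induction c as [|c IH]; intro a. reflexivity.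
  rewrite zn_S, IH. replace (S c) with (c + 1)%nat by lia. rewrite zn_add. simpl.
  replace (- (a + 1 + Z.of_nat c) + 1) with (- (a + Z.of_nat (c + 1)) + 1) by lia.
  replace (- (a + Z.of_nat (c + 1)) + 1 + Z.of_nat c) with (- a) by lia. ring.
Qed.

Lemma zn_pair a c f :
  zsum_n a c (fun t => f (2*t-1) + f (2*t)) = zsum_n (2*a-1) (2*c) f.
Proof.
  revert a; induction c as [|c IH]; intro a. reflexivity.
  replace (2 * S c)%nat with (S (S (2*c)))%nat by lia.
  rewrite !zn_S, IH.
  replace (2 * (a + 1) - 1) with (2*a-1+1+1) by lia.
  replace (2*a) with (2*a-1+1) at 2 by lia. ring.
Qed.

Lemma zn_sub a c1 c2 c3 f : (forall i, 0 <= f i) ->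
  zsum_n (a + Z.of_nat c1) c2 f <= zsum_n a (c1 + c2 + c3) f.
Proof.
  intro H. rewrite !zn_add.
  pose proof (zn_nonneg a c1 f H).
  pose proof (zn_nonneg (a + Z.of_nat (c1 + c2)) c3 f H). lia.
Qed.

Lemma win3 w2 h : (forall i, 0 <= h i) ->
  zsum_n 1 w2 (fun p => 8 * (h p + h (p+1) + h (p+2))) <= 24 * zsum_n 1 (w2+2) h.
Proof.
  intro H. rewrite zn_scale, !zn_plus.
  rewrite (zn_shift 1 w2 1 h), (zn_shift 1 w2 2 h).
  pose proof (zn_sub 1 0 w2 2 h H). pose proof (zn_sub 1 1 w2 1 h H).
  pose proof (zn_sub 1 2 w2 0 h H).
  replace (0 + w2 + 2)%nat with (w2+2)%nat in * by lia.
  replace (1 + w2 + 1)%nat with (w2+2)%nat in * by lia.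
  replace (2 + w2 + 0)%nat with (w2+2)%nat in * by lia.
  simpl Z.of_nat in *. rewrite Z.add_0_r in *. lia.
Qed.

Lemma win2 w2 h : (forall i, 0 <= h i) ->
  zsum_n 1 (w2+1) (fun p => 8 * (h p + h (p+1))) <= 16 * zsum_n 1 (w2+2) h.
Proof.
  intro H. rewrite zn_scale, !zn_plus.
  rewrite (zn_shift 1 (w2+1) 1 h).
  pose proof (zn_sub 1 0 (w2+1) 1 h H). pose proof (zn_sub 1 1 (w2+1) 0 h H).
  replace (0 + (w2 + 1) + 1)%nat with (w2+2)%nat in * by lia.
  replace (1 + (w2 + 1) + 0)%nat with (w2+2)%nat in * by lia.
  simpl Z.of_nat in *. rewrite Z.add_0_r in *. lia.
Qed.

Definition summ n (m M : Z -> Z) s t :=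
  Z.abs (dval n m M s (- t) (2 * t) t) +
  Z.abs (dval n m M s (- wd n - t) (2 * t - 1) (- wd n - 1 + t)).

Definition U n m M t := summ n m M (-1) t + summ n m M 0 t + summ n m M 1 t.

Lemma U_nonneg n m M t : 0 <= U n m M t.
Proof. unfold U, summ. pose proof Z.abs_nonneg. pose proof (Z.abs_nonneg 0). lia. Qed.

Lemma domm_true n i : -2 * wd n <= i <= 2 * wd n -> domm n i = true.
Proof. intro. unfold domm. apply andb_true_iff; split; apply Z.leb_le; lia. Qed.
Lemma domM_true n i : - wd n <= i <= wd n -> domM n i = true.
Proof. intro. unfold domM. apply andb_true_iff; split; apply Z.leb_le; lia. Qed.

Lemma summ_le n m M s t : -1 <= s <= 1 -> summ n m M s t <= U n m M t.
Proof.
  intro Hs. unfold U, summ.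
  pose proof Z.abs_nonneg.
  assert (s = -1 \/ s = 0 \/ s = 1) as [->|[->| ->]] by lia;
  pose proof (H (dval n m M (-1) (- t) (2 * t) t));
  pose proof (H (dval n m M (-1) (- wd n - t) (2 * t - 1) (- wd n - 1 + t)));
  pose proof (H (dval n m M 0 (- t) (2 * t) t));
  pose proof (H (dval n m M 0 (- wd n - t) (2 * t - 1) (- wd n - 1 + t)));
  pose proof (H (dval n m M 1 (- t) (2 * t) t));
  pose proof (H (dval n m M 1 (- wd n - t) (2 * t - 1) (- wd n - 1 + t))); lia.
Qed.

Lemma Fb n m M t s a b c : 0 <= wd n -> 1 <= t <= wd n -> -1 <= s <= 1 ->
  ~ (t = wd n /\ s = 1) -> a = t + s -> b = 2*t + s -> c = - t ->
  Z.abs (M a - m b - m c) <= U n m M t.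
Proof.
  intros Hw Ht Hs Hn -> -> ->.
  assert (dval n m M s (- t) (2 * t) t = M (t + s) - m (2*t+s) - m (- t)) as E.
  { unfold dval. rewrite (domm_true n (-t)) by lia.
    rewrite (domm_true n (2*t+s)) by lia. rewrite (domM_true n (t+s)) by lia.
    reflexivity. }
  pose proof (summ_le n m M s t Hs). unfold summ in H. rewrite E in H.
  pose proof (Z.abs_nonneg (dval n m M s (- wd n - t) (2 * t - 1) (- wd n - 1 + t))). lia.
Qed.

Lemma Gb n m M t s a b c : 0 <= wd n -> 1 <= t <= wd n -> -1 <= s <= 1 ->
  ~ (t = 1 /\ s = -1) -> a = - wd n - 1 + t + s -> b = 2*t - 1 + s -> c = - wd n - t ->
  Z.abs (M a - m b - m c) <= U n m M t.
Proof.
  intros Hw Ht Hs Hn -> -> ->.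
  assert (dval n m M s (- wd n - t) (2 * t - 1) (- wd n - 1 + t) =
          M (- wd n - 1 + t + s) - m (2*t-1+s) - m (- wd n - t)) as E.
  { unfold dval. rewrite (domm_true n (- wd n - t)) by lia.
    rewrite (domm_true n (2*t-1+s)) by lia. rewrite (domM_true n (- wd n - 1 + t+s)) by lia.
    reflexivity. }
  pose proof (summ_le n m M s t Hs). unfold summ in H. rewrite E in H.
  pose proof (Z.abs_nonneg (dval n m M s (- t) (2 * t) t)). lia.
Qed.

Lemma Eb n m M t i : 0 <= wd n -> i = 2*t -> 1 <= t <= wd n - 1 ->
  Z.abs (D2 m i) <= 4 * (U n m M t + U n m M (t+1)).
Proof.
  intros Hw -> Ht. unfold D2.
  pose proof (Fb n m M (t+1) 0 (t+1) (2*t+2) (-(t+1)) Hw ltac:(lia) ltac:(lia) ltac:(lia) ltac:(lia) ltac:(lia) ltac:(lia)).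
  pose proof (Fb n m M t 0 t (2*t) (-t) Hw ltac:(lia) ltac:(lia) ltac:(lia) ltac:(lia) ltac:(lia) ltac:(lia)).
  pose proof (Fb n m M t 1 (t+1) (2*t+1) (-t) Hw ltac:(lia) ltac:(lia) ltac:(lia) ltac:(lia) ltac:(lia) ltac:(lia)).
  pose proof (Fb n m M (t+1) (-1) t (2*t+1) (-(t+1)) Hw ltac:(lia) ltac:(lia) ltac:(lia) ltac:(lia) ltac:(lia) ltac:(lia)).
  lia.
Qed.

Lemma Ob n m M t i : 0 <= wd n -> i = 2*t - 1 -> 1 <= t <= wd n - 1 ->
  Z.abs (D2 m i) <= 4 * (U n m M t + U n m M (t+1)).
Proof.
  intros Hw -> Ht. unfold D2.
  pose proof (Gb n m M (t+1) 0 (- wd n + t) (2*t-1+2) (- wd n - t - 1) Hw ltac:(lia) ltac:(lia) ltac:(lia) ltac:(lia) ltac:(lia) ltac:(lia)).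
  pose proof (Gb n m M t 0 (- wd n - 1 + t) (2*t-1) (- wd n - t) Hw ltac:(lia) ltac:(lia) ltac:(lia) ltac:(lia) ltac:(lia) ltac:(lia)).
  pose proof (Gb n m M t 1 (- wd n + t) (2*t-1+1) (- wd n - t) Hw ltac:(lia) ltac:(lia) ltac:(lia) ltac:(lia) ltac:(lia) ltac:(lia)).
  pose proof (Gb n m M (t+1) (-1) (- wd n - 1 + t) (2*t-1+1) (- wd n - t - 1) Hw ltac:(lia) ltac:(lia) ltac:(lia) ltac:(lia) ltac:(lia) ltac:(lia)).
  lia.
Qed.

Ltac L := lia.

Lemma N1b n m M t i : 0 <= wd n -> i = - t - 2 -> 1 <= t <= wd n - 2 ->
  Z.abs (D2 m i) <= 8 * (U n m M t + U n m M (t+1) + U n m M (t+2)).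
Proof.
  intros Hw -> Ht. unfold D2.
  pose proof (Fb n m M t 0 t (2*t) (-t-2+2) Hw ltac:(L) ltac:(L) ltac:(L) ltac:(L) ltac:(L) ltac:(L)).
  pose proof (Fb n m M t 1 (t+1) (2*t+1) (-t-2+2) Hw ltac:(L) ltac:(L) ltac:(L) ltac:(L) ltac:(L) ltac:(L)).
  pose proof (Fb n m M (t+1) 0 (t+1) (2*t+2) (-t-2+1) Hw ltac:(L) ltac:(L) ltac:(L) ltac:(L) ltac:(L) ltac:(L)).
  pose proof (Fb n m M (t+1) 1 (t+2) (2*t+3) (-t-2+1) Hw ltac:(L) ltac:(L) ltac:(L) ltac:(L) ltac:(L) ltac:(L)).
  pose proof (Fb n m M (t+1) (-1) t (2*t+1) (-t-2+1) Hw ltac:(L) ltac:(L) ltac:(L) ltac:(L) ltac:(L) ltac:(L)).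
  pose proof (Fb n m M (t+2) 0 (t+2) (2*t+4) (-t-2) Hw ltac:(L) ltac:(L) ltac:(L) ltac:(L) ltac:(L) ltac:(L)).
  pose proof (Fb n m M (t+2) (-1) (t+1) (2*t+3) (-t-2) Hw ltac:(L) ltac:(L) ltac:(L) ltac:(L) ltac:(L) ltac:(L)).
  pose proof (Gb n m M (t+1) 0 (- wd n + t) (2*t+1) (- wd n - t - 1) Hw ltac:(L) ltac:(L) ltac:(L) ltac:(L) ltac:(L) ltac:(L)).
  pose proof (Gb n m M (t+2) 0 (- wd n + t + 1) (2*t+3) (- wd n - t - 2) Hw ltac:(L) ltac:(L) ltac:(L) ltac:(L) ltac:(L) ltac:(L)).
  pose proof (Gb n m M (t+1) 1 (- wd n + t + 1) (2*t+2) (- wd n - t - 1) Hw ltac:(L) ltac:(L) ltac:(L) ltac:(L) ltac:(L) ltac:(L)).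
  pose proof (Gb n m M (t+2) (-1) (- wd n + t) (2*t+2) (- wd n - t - 2) Hw ltac:(L) ltac:(L) ltac:(L) ltac:(L) ltac:(L) ltac:(L)).
  lia.
Qed.

Lemma N2b n m M p i : 0 <= wd n -> i = - wd n - p - 2 -> 1 <= p <= wd n - 2 ->
  Z.abs (D2 m i) <= 8 * (U n m M p + U n m M (p+1) + U n m M (p+2)).
Proof.
  intros Hw -> Ht. unfold D2.
  pose proof (Gb n m M p 0 (- wd n - 1 + p) (2*p-1) (- wd n - p - 2 + 2) Hw ltac:(L) ltac:(L) ltac:(L) ltac:(L) ltac:(L) ltac:(L)).
  pose proof (Gb n m M p 1 (- wd n + p) (2*p) (- wd n - p - 2 + 2) Hw ltac:(L) ltac:(L) ltac:(L) ltac:(L) ltac:(L) ltac:(L)).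
  pose proof (Gb n m M (p+1) 0 (- wd n + p) (2*p+1) (- wd n - p - 2 + 1) Hw ltac:(L) ltac:(L) ltac:(L) ltac:(L) ltac:(L) ltac:(L)).
  pose proof (Gb n m M (p+1) 1 (- wd n + p + 1) (2*p+2) (- wd n - p - 2 + 1) Hw ltac:(L) ltac:(L) ltac:(L) ltac:(L) ltac:(L) ltac:(L)).
  pose proof (Gb n m M (p+2) 0 (- wd n + p + 1) (2*p+3) (- wd n - p - 2) Hw ltac:(L) ltac:(L) ltac:(L) ltac:(L) ltac:(L) ltac:(L)).
  pose proof (Gb n m M (p+2) (-1) (- wd n + p) (2*p+2) (- wd n - p - 2) Hw ltac:(L) ltac:(L) ltac:(L) ltac:(L) ltac:(L) ltac:(L)).
  pose proof (Gb n m M (p+1) (-1) (- wd n - 1 + p) (2*p) (- wd n - p - 2 + 1) Hw ltac:(L) ltac:(L) ltac:(L) ltac:(L) ltac:(L) ltac:(L)).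
  pose proof (Fb n m M p 0 p (2*p) (-p) Hw ltac:(L) ltac:(L) ltac:(L) ltac:(L) ltac:(L) ltac:(L)).
  pose proof (Fb n m M (p+1) 0 (p+1) (2*p+2) (-p-1) Hw ltac:(L) ltac:(L) ltac:(L) ltac:(L) ltac:(L) ltac:(L)).
  pose proof (Fb n m M p 1 (p+1) (2*p+1) (-p) Hw ltac:(L) ltac:(L) ltac:(L) ltac:(L) ltac:(L) ltac:(L)).
  pose proof (Fb n m M (p+1) (-1) p (2*p+1) (-p-1) Hw ltac:(L) ltac:(L) ltac:(L) ltac:(L) ltac:(L) ltac:(L)).
  lia.
Qed.

Lemma height n A m M i : is_height_profile n A m M -> domm n i = true -> 0 <= m i <= n.
Proof.
  intros (_&_&_&_&H5&_) Hi. destruct (H5 i Hi) as ((p & _ & [Hin _] & Hh) & _).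
  destruct p as [x y]. unfold inR in Hin; cbv beta iota in Hin. unfold hR, c07 in Hh. cbn [fst snd] in Hh.
  rewrite <- Hh. Z.div_mod_to_equations. lia.
Qed.

Lemma Bb n A m M i : 0 < n -> is_height_profile n A m M ->
  -2 * wd n <= i <= 2 * wd n - 2 -> Z.abs (D2 m i) <= 4 * n.
Proof.
  intros Hn H Hi. unfold D2.
  pose proof (height n A m M i H ltac:(apply domm_true; lia)).
  pose proof (height n A m M (i+1) H ltac:(apply domm_true; lia)).
  pose proof (height n A m M (i+2) H ltac:(apply domm_true; lia)).
  lia.
Qed.

Theorem mainTheorem18 :
  exists C : R,
    forall (n : Z), (0 < n)%Z ->
    forall (A : Z * Z -> Prop) (m M : Z -> Z),
      is_height_profile n A m M ->
      (IZR (zsum (- 2 * wd n) (2 * wd n - 2) (fun i => Z.abs (D2 m i)))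
        <= C * IZR (discrepancy n m M + n))%R.
Proof.
  exists (IZR 200). intros n Hn A m M H.
  rewrite <- mult_IZR. apply IZR_le.
  assert (Hw0 : 0 <= wd n) by (unfold wd; Z.div_mod_to_equations; lia).
  pose proof (fun i (Hi : -2 * wd n <= i <= 2 * wd n - 2) => Bb n A m M i Hn H Hi) as Hbd.
  assert (HDs : forall s, Ds n m M s = zsum_n 1 (Z.to_nat (wd n)) (summ n m M s)).
  { intro s. unfold Ds, zsum. replace (wd n - 1 + 1) with (wd n) by lia. reflexivity. }
  assert (HT : zsum_n 1 (Z.to_nat (wd n)) (U n m M) <= 3 * discrepancy n m M /\
               0 <= discrepancy n m M).
  { unfold U. rewrite !zn_plus. unfold discrepancy. rewrite !HDs.
    assert (forall s, 0 <= zsum_n 1 (Z.to_nat (wd n)) (summ n m M s)).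
    { intro s; apply zn_nonneg; intro; unfold summ;
      pose proof (Z.abs_nonneg (dval n m M s (- i) (2 * i) i));
      pose proof (Z.abs_nonneg (dval n m M s (- wd n - i) (2 * i - 1) (- wd n - 1 + i))); lia. }
    pose proof (H0 (-1)); pose proof (H0 0); pose proof (H0 1). lia. }
  destruct HT as [HT HD0].
  unfold zsum.
  remember (wd n) as w eqn:Hw.
  set (f := fun i => Z.abs (D2 m i)).
  assert (Hb : forall i, -2 * w <= i <= 2 * w - 2 -> f i <= 4 * n)
    by (intros; unfold f; apply Hbd; lia).
  assert (w = 0 \/ w = 1 \/ 2 <= w) as [E0|[E1|E2]] by lia.
  - replace (Z.to_nat (2 * w - 2 - -2 * w + 1)) with 0%nat by lia. cbn [zsum_n]. lia.
  - replace (Z.to_nat (2 * w - 2 - -2 * w + 1)) with 3%nat by lia.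
    assert (zsum_n (-2 * w) 3 f <= zsum_n (-2 * w) 3 (fun _ => 4 * n))
      by (apply zn_le; intros; apply Hb; cbn [Z.of_nat Pos.of_succ_nat] in *; lia).
    cbn [zsum_n] in H0 |- *. lia.
  - set (w2 := Z.to_nat (w - 2)). assert (Hw2 : Z.of_nat w2 = w - 2) by (unfold w2; lia).
    replace (Z.to_nat w) with (w2 + 2)%nat in HT by lia.
    replace (Z.to_nat (2 * w - 2 - -2 * w + 1)) with ((w2+2) + (w2+2) + (2*w2+3))%nat by lia.
    rewrite (zn_add _ (w2+2+(w2+2))%nat (2*w2+3)%nat), (zn_add _ (w2+2)%nat (w2+2)%nat).
    assert (Uz : forall i, 0 <= U n m M i) by (intro; apply U_nonneg).
    lazymatch goal with |- zsum_n ?b1 _ _ + zsum_n ?b2 _ _ + zsum_n ?b3 _ _ <= _ =>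
      remember b3 as a3 eqn:Ea3; remember b2 as a2 eqn:Ea2; remember b1 as a1 eqn:Ea1 end.
    assert (B2 : zsum_n a1 (w2+2) f <= 8 * n + 24 * zsum_n 1 (w2+2) (U n m M)).
    { assert (Eq : zsum_n a1 (w2+2) f = f (- (w + 1)) +
        (f (- (w + 1 + 1)) + zsum_n 1 w2 (fun i : Z => f (- (i + (w + 2)))))).
      { replace (zsum_n a1 (w2+2) f) with (zsum_n (w+1) (w2+2) (fun i => f (- i)))
          by (rewrite zn_refl; f_equal; lia).
        replace (w2+2)%nat with (S (S w2)) by lia. rewrite !zn_S.
        replace (w+1+1+1) with (1 + (w+2)) by lia.
        rewrite <- (zn_shift 1 w2 (w+2)). reflexivity. }
      assert (S2 : zsum_n 1 w2 (fun i => f (- (i + (w + 2)))) <=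
          zsum_n 1 w2 (fun p => 8 * (U n m M p + U n m M (p+1) + U n m M (p+2))))
        by (apply zn_le; intros p Hp; unfold f; apply N2b; lia).
      pose proof (win3 w2 (U n m M) Uz).
      pose proof (Hb (- (w+1)) ltac:(lia)). pose proof (Hb (- (w+1+1)) ltac:(lia)).
      lia. }
    assert (B1 : zsum_n a2 (w2+2) f <= 8 * n + 24 * zsum_n 1 (w2+2) (U n m M)).
    { assert (Eq : zsum_n a2 (w2+2) f = f (- 1) +
        (f (- (1 + 1)) + zsum_n 1 w2 (fun i : Z => f (- (i + 2))))).
      { replace (zsum_n a2 (w2+2) f) with (zsum_n 1 (w2+2) (fun i => f (- i)))
          by (rewrite zn_refl; f_equal; lia).
        replace (w2+2)%nat with (S (S w2)) by lia. rewrite !zn_S.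
        replace (1+1+1) with (1 + 2) by lia.
        rewrite <- (zn_shift 1 w2 2). reflexivity. }
      assert (S1 : zsum_n 1 w2 (fun i => f (- (i + 2))) <=
          zsum_n 1 w2 (fun p => 8 * (U n m M p + U n m M (p+1) + U n m M (p+2))))
        by (apply zn_le; intros p Hp; unfold f; apply N1b; lia).
      pose proof (win3 w2 (U n m M) Uz).
      pose proof (Hb (- 1) ltac:(lia)). pose proof (Hb (- (1+1)) ltac:(lia)).
      lia. }
    assert (B3 : zsum_n a3 (2*w2+3) f <= 4 * n + 16 * zsum_n 1 (w2+2) (U n m M)).
    { assert (Eq : zsum_n a3 (2*w2+3) f = f a3 +
         zsum_n 1 (w2+1) (fun t => f (2*t-1) + f (2*t))).
      { replace (2*w2+3)%nat with (S (2*(w2+1))) by lia. rewrite zn_S.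
        replace (a3 + 1) with (2*1-1) by lia.
        rewrite <- zn_pair. reflexivity. }
      assert (S3 : zsum_n 1 (w2+1) (fun t => f (2*t-1) + f (2*t)) <=
          zsum_n 1 (w2+1) (fun p => 8 * (U n m M p + U n m M (p+1))))
        by (apply zn_le; intros p Hp; unfold f;
            pose proof (Eb n m M p (2*p) ltac:(lia) eq_refl ltac:(lia));
            pose proof (Ob n m M p (2*p-1) ltac:(lia) eq_refl ltac:(lia)); lia).
      pose proof (win2 w2 (U n m M) Uz).
      pose proof (Hb a3 ltac:(lia)).
      lia. }
    lia.
Qed.
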